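(* Consider a flow that traverses two systems in sequence, where system $i$ ($i=1,2$) shares a constant service rate $c_i>0$ (bits per unit time) among flows by non-preemptive strict priority scheduling (FIFO queues, infinite buffers, initially empty), and the flow is given the highest priority at both systems. Let $l^M$ be the maximum packet length of the flow and $l^{M_l}$ the maximum packet length of all lower-priority queues. Then the concatenated system offers the flow the service curve $\beta(t)=\min\{c_1,c_2\}\left(t-\frac{l^M+l^{M_l}}{c_1}-\frac{l^M+l^{M_l}}{c_2}\right)^{+}$, i.e. for all $t\ge0$, $A^{*}(t)\ge\inf_{0\le s\le t}\{A(s)+\beta(t-s)\}$, where $A$ is the flow's input to the first system and $A^{*}$ its output from the second system.
   Context: $(x)^{+}=\max\{x,0\}$. Non-preemptive strict priority: whenever the link is free and some queue is nonempty, it starts transmitting the head packet of the highest-priority nonempty queue; a transmission is never interrupted. By convention, a packet is said to have arrived at (respectively, been served by) a system when and only when its last bit has arrived (respectively, departed). $A(t)$ is the cumulative amount of the flow's traffic (sum of packet lengths) entering the first system in $[0,t)$ and $A^{*}(t)$ the cumulative amount leaving the second system in $[0,t)$, with $A(0)=A^{*}(0)=0$. A function $\beta$ (nonnegative, nondecreasing, $\beta(0)=0$) is a service curve if $A^{*}(t)\ge\inf_{0\le s\le t}\{A(s)+\beta(t-s)\}$ for all $t\ge0$. *)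

(* Defs.v *)
From HB Require Import structures.
From mathcomp Require Import all_boot all_order all_algebra.
From mathcomp Require Import mathcomp_extra boolp classical_sets functions
  cardinality fsbigop reals.

Set Implicit Arguments.
Unset Strict Implicit.
Unset Printing Implicit Defensive.

Import Order.TTheory GRing.Theory Num.Theory.
Local Open Scope classical_set_scope.
Local Open Scope ring_scope.

Definition sumf (A B C : Type) (g : A -> C) (h : B -> C) (x : A + B) : C :=
  match x with inl a => g a | inr b => h b end.

(* Priority class at a server: the flow of interest is alone in the highest
   priority queue (class 0); a cross-traffic packet of (lower-priority) class k
   is put in queue k.+1.  Smaller class = higher priority. *)
Definition prio_cls (F O : Type) (cl : O -> nat) : F + O -> nat :=
  sumf (fun _ : F => 0%N) (fun o => (cl o).+1).

Section Server.
Variables (R : realType) (P : Type).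
(* Each packet p has class cls p, length len p,
   arrival time arr p (time at which its LAST bit has arrived).
   [sv p] : p is eventually transmitted; then its transmission occupies the
   link on [st p, st p + len p / c); its departure (last bit) is st p + len p / c.
   A packet p with ~ sv p stays in its queue forever. *)
Variables (c : R) (cls : P -> nat) (len arr : P -> R) (sv : P -> Prop) (st : P -> R).

Definition transmitting (p : P) (tau : R) : Prop :=
  sv p /\ st p <= tau < st p + len p / c.

Definition busy (tau : R) : Prop := exists p, transmitting p tau.

Definition waiting (p : P) (tau : R) : Prop :=
  arr p <= tau /\ (sv p -> tau < st p).

Definition np_prio_run : Prop :=
  (forall p, 0 < len p) /\
  (* initially empty: nothing arrives before time 0 *)
  (forall p, 0 <= arr p) /\
  (forall p, sv p -> arr p <= st p) /\
  (* one transmission at a time, never interrupted *)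
  (forall p p', p <> p' -> sv p -> sv p' ->
      st p + len p / c <= st p' \/ st p' + len p' / c <= st p) /\
  (forall p tau, waiting p tau -> busy tau) /\
  (forall p p', sv p' -> (cls p < cls p')%N -> ~ waiting p (st p')) /\
  (forall p p', cls p = cls p' -> arr p < arr p' -> sv p' ->
      sv p /\ st p < st p').
End Server.

(* Cumulative amount (sum of lengths) of the packets of S whose event time
   tm f lies in [0, t)  (all event times are >= 0 in our runs). *)
Definition cumul (R : realType) (F : choiceType) (len tm : F -> R)
    (S : set F) (t : R) : R :=
  \sum_(f \in S `&` [set f | tm f < t]) len f.

Definition beta_c4 (R : realType) (c1 c2 lM lMl : R) (t : R) : R :=
  Num.min c1 c2 * Num.max (t - (lM + lMl) / c1 - (lM + lMl) / c2) 0.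

(* Main.v *)
Require Import Defs.
From HB Require Import structures.
From mathcomp Require Import all_boot all_order all_algebra.
From mathcomp Require Import mathcomp_extra boolp classical_sets functions
  cardinality fsbigop reals.
From mathcomp Require finmap.
From mathcomp Require Import ring lra zify.
Import Order.TTheory GRing.Theory Num.Theory.
Local Open Scope classical_set_scope.
Local Open Scope ring_scope.
Set Implicit Arguments.
Unset Strict Implicit.

Lemma fsum_le_sub (R : realType) (I : choiceType) (A B : set I) (F : I -> R) :
  finite_set B -> A `<=` B -> (forall i, B i -> 0 <= F i) ->
  \sum_(i \in A) F i <= \sum_(i \in B) F i.
Proof.
move=> fB AB F0; rewrite [X in _ <= X](fsbigID A) // (setIidr AB).
rewrite lerDl; apply: fsumr_ge0 => i [Bi _]; exact: F0.
Qed.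

Lemma seq_ub (T : choiceType) (R : realType) (g : T -> R) (s : seq T) :
  exists M, forall x, x \in s -> g x <= M.
Proof.
elim: s => [|a s [M HM]]; first by exists 0.
exists (Num.max (g a) M) => x; rewrite inE => /orP[/eqP->|/HM xs].
  by rewrite le_max lexx.
by rewrite le_max xs orbT.
Qed.

Lemma finite_ub (T : choiceType) (R : realType) (A : set T) (g : T -> R) :
  finite_set A -> exists M, forall x, A x -> g x <= M.
Proof.
move/finite_fsetP => [B ->]; have [M HM] := seq_ub g (finmap.enum_fset B).
by exists M => x /= xB; apply: HM.
Qed.

Lemma seq_argmax (T : choiceType) (R : realType) (A : set T) (g : T -> R) (s : seq T) :
  (exists x, x \in s /\ A x) ->
  exists x, A x /\ x \in s /\ forall y, y \in s -> A y -> g y <= g x.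
Proof.
elim: s => [[x [] //]|a s IH [x [xs Ax]]].
have [E|N] := pselect (exists x, x \in s /\ A x).
  have [m [Am [ms Hm]]] := IH E.
  have [Aa|nAa] := pselect (A a).
    have [le|lt] := leP (g a) (g m).
      exists m; split => //; split; first by rewrite inE ms orbT.
      by move=> y; rewrite inE => /orP[/eqP->//|/Hm].
    exists a; split => //; split; first by rewrite inE eqxx.
    move=> y; rewrite inE => /orP[/eqP->//|ys Ay].
    by apply: le_trans (Hm _ ys Ay) (ltW lt).
  exists m; split => //; split; first by rewrite inE ms orbT.
  by move=> y; rewrite inE => /orP[/eqP-> /nAa//|/Hm].
move: xs; rewrite inE => /orP[/eqP xa|xs]; last by exfalso; apply: N; exists x.
subst x; exists a; split => //; split; first by rewrite inE eqxx.
move=> y; rewrite inE => /orP[/eqP->//|ys Ay].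
by exfalso; apply: N; exists y.
Qed.

Lemma finite_argmax (T : choiceType) (R : realType) (A : set T) (g : T -> R) x0 :
  finite_set A -> A x0 -> exists x, A x /\ forall y, A y -> g y <= g x.
Proof.
move/finite_fsetP => [B eA] Ax0.
have [|x [Ax [_ Hx]]] := @seq_argmax T R A g (finmap.enum_fset B).
  by exists x0; split => //; move: Ax0; rewrite eA.
by exists x; split => // y Ay; apply: Hx => //; move: Ay; rewrite eA.
Qed.

Lemma finite_argmin (T : choiceType) (R : realType) (A : set T) (g : T -> R) x0 :
  finite_set A -> A x0 -> exists x, A x /\ forall y, A y -> g x <= g y.
Proof.
move=> fA Ax0; have [x [Ax Hx]] := finite_argmax (fun y => - g y) fA Ax0.
by exists x; split => // y Ay; rewrite -lerN2; apply: Hx.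
Qed.

Section OneServer.
Variables (R : realType) (F O : choiceType) (c lM lMl : R) (lenF arrF : F -> R)
  (cl : O -> nat) (lenO arrO : O -> R) (sv : F + O -> Prop) (st : F + O -> R).
Hypotheses (c0 : 0 < c) (lM0 : 0 <= lM) (lMl0 : 0 <= lMl)
  (hlM : forall f, lenF f <= lM) (hlO : forall o, lenO o <= lMl)
  (hfin : forall t, finite_set [set f | arrF f < t])
  (run : np_prio_run c (@prio_cls F O cl) (sumf lenF lenO) (sumf arrF arrO) sv st).

Local Notation stF k := (st (inl k)).
Local Notation dep k := (st (inl k) + lenF k / c).
Local Notation L := (sumf lenF lenO).

Lemma len_pos p : 0 < L p.
Proof. by case: run. Qed.
Lemma lenF_pos f : 0 < lenF f.
Proof. exact: (len_pos (inl f)). Qed.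
Lemma arrF_ge0 f : 0 <= arrF f.
Proof. by case: run => _ [H _]; exact: (H (inl f)). Qed.
Lemma arr_st p : sv p -> sumf arrF arrO p <= st p.
Proof. by case: run => _ [_ [H _]]; exact: H. Qed.
Lemma nov p p' : p <> p' -> sv p -> sv p' ->
      st p + L p / c <= st p' \/ st p' + L p' / c <= st p.
Proof. by case: run => _ [_ [_ [H _]]]; exact: H. Qed.
Lemma wc p tau : waiting (sumf arrF arrO) sv st p tau -> busy c L sv st tau.
Proof. by case: run => _ [_ [_ [_ [H _]]]]; exact: H. Qed.
Lemma prio p p' : sv p' -> (@prio_cls F O cl p < @prio_cls F O cl p')%N ->
  ~ waiting (sumf arrF arrO) sv st p (st p').
Proof. by case: run => _ [_ [_ [_ [_ [H _]]]]]; exact: H. Qed.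
Lemma fifo p p' : @prio_cls F O cl p = @prio_cls F O cl p' ->
  sumf arrF arrO p < sumf arrF arrO p' -> sv p' -> sv p /\ st p < st p'.
Proof. by case: run => _ [_ [_ [_ [_ [_ H]]]]]; exact: H. Qed.

Lemma lenc_pos p : 0 < L p / c.
Proof. by rewrite divr_gt0 // len_pos. Qed.
Lemma lenFc_pos f : 0 < lenF f / c.
Proof. exact: (lenc_pos (inl f)). Qed.

Lemma prio_flow g p : sv p -> arrF g <= st p -> (sv (inl g) -> st p < stF g) ->
  exists k, p = inl k.
Proof.
case: p => [k|o] svp h1 h2; first by exists k.
exfalso; apply: (prio (p := inl g) svp (isT : (0 < (cl o).+1)%N)).
by split.
Qed.

Lemma all_served f : sv (inl f).
Proof.
apply: contrapT => nsv.
have fifoF k : sv (inl k) -> arrF k <= arrF f.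
  move=> svk; rewrite leNgt; apply/negP => lt.
  by have [/nsv] := fifo (p := inl f) (p' := inl k) erefl lt svk.
have [M HM] := finite_ub (fun k => dep k) (hfin (arrF f + 1)).
have H p tau : sv p -> st p <= tau -> tau < st p + L p / c -> arrF f <= st p ->
    M <= tau -> False.
  move=> svp h1 h2 h3 h4.
  have [k pk] := prio_flow (g := f) svp h3 (fun x => False_ind _ (nsv x)).
  subst p.
  have hk : dep k <= M by apply: HM; rewrite /= (le_lt_trans (fifoF _ svp)) // ltrDl ltr01.
  by have := le_lt_trans (le_trans hk h4) h2; rewrite ltxx.
have wf tau : arrF f <= tau -> busy c L sv st tau.
  by move=> h; apply: (wc (p := inl f)); split => // /nsv.
set t1 := Num.max M (arrF f).
have Mt1 : M <= t1 by rewrite le_max lexx.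
have ft1 : arrF f <= t1 by rewrite le_max lexx orbT.
have [p1 [sv1 /andP[a1 b1]]] := wf _ ft1.
have s1 : st p1 < arrF f.
  by rewrite ltNge; apply/negP => h; apply: (H p1 t1).
set t2 := st p1 + L p1 / c.
have ft2 : arrF f <= t2 by rewrite (le_trans ft1) // ltW.
have [p2 [sv2 /andP[a2 b2]]] := wf _ ft2.
have s2 : st p2 < arrF f.
  rewrite ltNge; apply/negP => h; apply: (H p2 t2) => //.
  by rewrite (le_trans Mt1) // ltW.
have n21 : p2 <> p1 by move=> e; move: b2; rewrite e ltxx.
move: b1 b2 a2 ft1 s2 a1; rewrite /t2.
by case: (nov n21 sv2 sv1); lra.
Qed.

Lemma flow_ne k g : k <> g -> inl k <> inl g :> F + O.
Proof. by move=> H [] /H. Qed.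

Lemma stF_inj k g : stF k = stF g -> k = g.
Proof.
move=> e; apply: contrapT => ne.
have := lenFc_pos k; have := lenFc_pos g.
case: (nov (flow_ne ne) (all_served k) (all_served g)) => /=; rewrite e; lra.
Qed.

Lemma before k g : stF k < stF g -> dep k <= stF g.
Proof.
move=> lt; have ne : k <> g by move=> e; move: lt; rewrite e ltxx.
have := lenFc_pos g.
by case: (nov (flow_ne ne) (all_served k) (all_served g)) => //=; lra.
Qed.

Lemma fin_pre b : finite_set [set k | stF k < b].
Proof.
apply: sub_finite_set (hfin b) => k /= h.
by apply: le_lt_trans h; exact: (arr_st (all_served k)).
Qed.

Lemma fin_int a b : finite_set [set k | a <= stF k < b].
Proof.
by apply: sub_finite_set (fin_pre b) => k /= /andP[].
Qed.


Lemma caseA g : (forall k, stF k < stF g -> dep k < arrF g) ->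
  stF g <= arrF g + lMl / c.
Proof.
move=> HA; rewrite leNgt; apply/negP => lt.
set y := arrF g + lMl / c.
have ay : arrF g <= y by rewrite lerDl divr_ge0 // ltW.
have [p [svp /andP[a b]]] := wc (p := inl g) (tau := y) (conj ay (fun _ => lt)).
case: p svp a b => [k|o] svp a b.
  have lk : stF k < stF g by apply: le_lt_trans lt.
  by have := HA k lk; move: b ay => /=; lra.
have [h|h] := leP (arrF g) (st (inr o)).
  by have [k] := prio_flow (g := g) svp h (fun _ => le_lt_trans a lt).
have : lenO o / c <= lMl / c by rewrite ler_wpM2r // ?invr_ge0 ?ltW.
by move: b h; rewrite /y /=; lra.
Qed.

Lemma S_empty x : \sum_(k \in [set k | x <= stF k < x]) lenF k = c * (x - x).
Proof.
rewrite subrr mulr0.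
have -> : [set k | x <= stF k < x] = set0.
  by apply/seteqP; split => k //= /andP[h1 h2]; move: (le_lt_trans h1 h2); rewrite ltxx.
by rewrite fsbig_set0.
Qed.

Lemma chain n : forall (s : seq F) g, (size s <= n)%N ->
  (forall k, stF k < stF g -> k \in s) ->
  exists h, stF h <= stF g /\ stF h <= arrF h + lMl / c /\
    \sum_(k \in [set k | stF h <= stF k < stF g]) lenF k = c * (stF g - stF h).
Proof.
elim: n => [|n IH] s g hs hin;
  (have [HA|HB] := pselect (forall k, stF k < stF g -> dep k < arrF g));
  try by exists g; split => //; split; [exact: caseA | exact: S_empty].
  move/existsNP: HB => [k /not_implyP [lk _]].
  by case: s hs hin => [_ /(_ k lk)|].
move/existsNP: HB => [k /not_implyP [ltk /negP]]; rewrite -leNgt => hk.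
have [j [ltj Hj]] := finite_argmax (fun k => stF k) (fin_pre (stF g)) ltk.
have ltj' : stF j < stF g := ltj.
have Hj' : forall y, stF y < stF g -> stF y <= stF j := Hj.
have depj : arrF g <= dep j.
  move: (Hj' k ltk); rewrite le_eqVlt => /orP[/eqP/stF_inj e|lt]; first by rewrite -e.
  have := before lt; have := lenFc_pos j; move: hk; lra.
have eqg : stF g = dep j.
  apply/eqP; rewrite eq_le; apply/andP; split; last exact: before.
  rewrite leNgt; apply/negP => lt.
  have [p [svp /andP[a b]]] := wc (p := inl g) (tau := dep j) (conj depj (fun _ => lt)).
  case: p svp a b => [k2|o] svp a b.
    have lk2 : stF k2 < stF g by apply: le_lt_trans lt.
    move: (Hj' k2 lk2); rewrite le_eqVlt => /orP[/eqP/stF_inj e|lt2].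
      by move: b; rewrite e /= ltxx.
    by have := before lt2; have := lenFc_pos j; move: b => /=; lra.
  have [h|h] := leP (arrF g) (st (inr o)).
    by have [k3] := prio_flow (g := g) svp h (fun _ => le_lt_trans a lt).
  have := lenFc_pos j.
  case: (nov (p := inr o) (p' := inl j) (fun e => ltac:(discriminate)) svp (all_served j)).
    by move: b => /=; lra.
  by move: h depj => /=; lra.
set s' := [seq x <- s | x != j].
have js : j \in s := hin j ltj'.
have hs' : (size s' <= n)%N.
  rewrite size_filter.
  have ecnt : count (predC1 j) s = count (predC (pred1 j)) s by apply: eq_count.
  have := count_predC (pred1 j) s.
  have : (0 < count (pred1 j) s)%N by rewrite -has_count; apply/hasP; exists j => /=.
  move: hs; rewrite ecnt => hs H0 H1; rewrite -ltnS (leq_trans _ hs) // -H1 -{1}(add0n (count _ s)) ltn_add2r. by [].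
have hin' : forall k, stF k < stF j -> k \in s'.
  move=> k2 lt2; rewrite mem_filter hin ?andbT; last exact: lt_trans ltj'.
  by apply/eqP => e; move: lt2; rewrite e ltxx.
have [h [hh1 [hh2 hh3]]] := IH s' j hs' hin'.
exists h; split; first exact: le_trans hh1 (ltW ltj').
split => //.
have -> : [set k | stF h <= stF k < stF g] =
          [set k | stF h <= stF k < stF j] `|` [set j].
  apply/seteqP; split => x /=.
    move=> /andP[a b]; move: (Hj' x b); rewrite le_eqVlt => /orP[/eqP/stF_inj e|lt].
      by right.
    by left; rewrite a lt.
  by case => [/andP[a b]| ->]; rewrite ?hh1 ?ltj' ?a ?(lt_trans b ltj').
rewrite fsbigU0; [|exact: fin_int|exact: finite_set1|].
  rewrite fsbig_set1 hh3 eqg /=; field; exact: lt0r_neq0.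
by move=> x [/= /andP[_ b] e]; move: b; rewrite e ltxx.
Qed.

Lemma server t : 0 <= t -> exists s, 0 <= s <= t /\
  cumul lenF arrF setT s + c * Num.max (t - s - (lM + lMl) / c) 0 <=
  cumul lenF (fun f => st (inl f) + lenF f / c) [set f | sv (inl f)] t.
Proof.
move=> t0; rewrite /cumul.
set Out := [set f | sv (inl f)] `&` [set f | dep f < t].
have fOut : finite_set Out.
  apply: sub_finite_set (hfin t) => x [_ /= h].
  have := arr_st (all_served x); have := lenFc_pos x; move: h => /=; lra.
have lenF0 i : 0 <= lenF i by apply: ltW; apply: lenF_pos.
have [[g0 [a0 b0]]|NU] := pselect (exists g, arrF g < t /\ t <= dep g).
  set U := [set g | arrF g < t /\ t <= dep g].
  have fU : finite_set U by apply: sub_finite_set (hfin t) => x [].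
  have [g [[ag bg] Hg]] := finite_argmin (fun k => stF k) fU (conj a0 b0 : U g0).
  have P1 k : stF k < stF g -> dep k < t.
    move=> lt; rewrite ltNge; apply/negP => tk.
    have [ak|ak] := ltP (arrF k) t.
      by have := Hg k (conj ak tk); rewrite leNgt lt.
    have [_] := fifo (p := inl g) (p' := inl k) erefl (lt_le_trans ag ak) (all_served k).
    by rewrite ltNge (ltW lt).
  have [B eB] := finite_fsetP.1 (fin_pre (stF g)).
  have hin k : stF k < stF g -> k \in finmap.enum_fset B.
    by move=> lk; have : [set k | stF k < stF g] k by []; rewrite eB.
  have [h [h1 [h2 h3]]] := @chain (size (finmap.enum_fset B)) _ g (leqnn _) hin.
  exists (arrF h); split.
    rewrite arrF_ge0 /=.
    have [lt|ge] := ltP (stF h) (stF g).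
      have := P1 h lt; have := arr_st (all_served h); have := lenFc_pos h.
      move=> /= *; lra.
    have e : stF h = stF g by apply/eqP; rewrite eq_le h1 ge.
    by rewrite (stF_inj e) ltW.
  have e1 : \sum_(k \in setT `&` [set k | arrF k < arrF h]) lenF k <=
            \sum_(k \in [set k | stF k < stF h]) lenF k.
    apply: fsum_le_sub; [exact: fin_pre| |by move=> *].
    move=> k [_ /= lt].
    by have [] := fifo (p := inl k) (p' := inl h) erefl lt (all_served h).
  have e2 : \sum_(k \in [set k | stF k < stF g]) lenF k <= \sum_(k \in Out) lenF k.
    apply: fsum_le_sub => //; move=> k /= lt; split; [exact: all_served|exact: P1].
  have e3 : \sum_(k \in [set k | stF k < stF g]) lenF k =
     \sum_(k \in [set k | stF k < stF h]) lenF k +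
     \sum_(k \in [set k | stF h <= stF k < stF g]) lenF k.
    have -> : [set k | stF k < stF g] =
       [set k | stF k < stF h] `|` [set k | stF h <= stF k < stF g].
      apply/seteqP; split => x /=.
        move=> lt; have [l|l] := ltP (stF x) (stF h); [by left|by right; apply/andP].
      by case => [l|/andP[_ l]] //; exact: lt_le_trans l h1.
    rewrite fsbigU0 //; [exact: fin_pre|exact: fin_int|].
    by move=> x [/= l /andP[l2 _]]; move: (lt_le_trans l l2); rewrite ltxx.
  have e4 : c * Num.max (t - arrF h - (lM + lMl) / c) 0 <= c * (stF g - stF h).
    rewrite ler_pM2l // ge_max subr_ge0 h1 andbT.
    have : lenF g / c <= lM / c by rewrite ler_wpM2r // ?invr_ge0 ?ltW.
    move: bg h2; rewrite mulrDl /=; lra.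
  rewrite h3 in e3.
  by apply: le_trans (lerD e1 e4) _; rewrite -e3.
exists t; split; first by rewrite t0 lexx.
rewrite subrr sub0r (max_idPr _); last first.
  by rewrite oppr_le0 divr_ge0 ?addr_ge0 // ltW.
rewrite mulr0 addr0; apply: fsum_le_sub => //.
move=> k [_ /= ak]; split; first exact: all_served.
by rewrite /= ltNge; apply/negP => tk; apply: NU; exists k.
Qed.

End OneServer.

Lemma beta_split (R : realType) (c1 c2 a b : R) : 0 < c1 -> 0 < c2 ->
  Num.min c1 c2 * Num.max (a + b) 0 <= c1 * Num.max a 0 + c2 * Num.max b 0.
Proof.
move=> c10 c20.
have m0 : 0 <= Num.min c1 c2 by rewrite le_min !ltW.
have mc1 : Num.min c1 c2 <= c1 by rewrite ge_min lexx.
have mc2 : Num.min c1 c2 <= c2 by rewrite ge_min lexx orbT.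
have ma : 0 <= Num.max a 0 by rewrite le_max lexx orbT.
have mb : 0 <= Num.max b 0 by rewrite le_max lexx orbT.
have ha : a <= Num.max a 0 by rewrite le_max lexx.
have hb : b <= Num.max b 0 by rewrite le_max lexx.
have mab : Num.max (a + b) 0 <= Num.max a 0 + Num.max b 0.
  by rewrite ge_max lerD //= addr_ge0.
apply: le_trans (ler_wpM2l m0 mab) _.
by rewrite mulrDr lerD // ler_wpM2r.
Qed.

Theorem corollary4 (R : realType) (F O1 O2 : choiceType)
  (c1 c2 lM lMl : R)
  (lenF arrF : F -> R)
  (cl1 : O1 -> nat) (len1 arr1 : O1 -> R)
  (cl2 : O2 -> nat) (len2 arr2 : O2 -> R)
  (sv1 : F + O1 -> Prop) (st1 : F + O1 -> R)
  (sv2 : F + O2 -> Prop) (st2 : F + O2 -> R) :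
  0 < c1 -> 0 < c2 -> 0 <= lM -> 0 <= lMl ->
  (forall f, lenF f <= lM) ->
  (forall o, len1 o <= lMl) -> (forall o, len2 o <= lMl) ->
  (forall t, finite_set [set f | arrF f < t]) ->
  np_prio_run c1 (@prio_cls F _ cl1) (sumf lenF len1) (sumf arrF arr1) sv1 st1 ->
  np_prio_run c2 (@prio_cls F _ cl2) (sumf lenF len2)
    (sumf (fun f => st1 (inl f) + lenF f / c1) arr2) sv2 st2 ->
  forall t, 0 <= t ->
    inf [set cumul lenF arrF setT s + beta_c4 c1 c2 lM lMl (t - s)
        | s in [set s | 0 <= s <= t]]
    <= cumul lenF (fun f => st2 (inl f) + lenF f / c2) [set f | sv2 (inl f)] t.
Proof.
move=> c10 c20 lM0 lMl0 hlM hl1 hl2 hfin run1 run2 t t0.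
have srv1 f : sv1 (inl f) := all_served hfin run1 f.
have hfin2 : forall t, finite_set [set f | st1 (inl f) + lenF f / c1 < t].
  move=> u; apply: sub_finite_set (hfin u) => f /= h.
  case: run1 => lp [_ [ast _]].
  have := ast (inl f) (srv1 f); have : 0 < lenF f / c1 by rewrite divr_gt0 // (lp (inl f)).
  move: h => /=; lra.
have [s' [/andP[s'0 s't] H2]] := server c20 lM0 lMl0 hlM hl2 hfin2 run2 t0.
have [s [/andP[s0 ss'] H1]] := server c10 lM0 lMl0 hlM hl1 hfin run1 s'0.
have eS : [set f | sv1 (inl f)] = setT by apply/seteqP; split => // f _; exact: srv1.
rewrite eS in H1.
have lenF0 f : 0 <= lenF f by case: run1 => lp _; exact: ltW (lp (inl f)).
have hlb : has_lbound [set cumul lenF arrF setT s + beta_c4 c1 c2 lM lMl (t - s)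
        | s in [set s | 0 <= s <= t]].
  exists 0 => y [x _ <-]; rewrite addr_ge0 //; first by apply: fsumr_ge0.
  rewrite /beta_c4 mulr_ge0 //; first by rewrite le_min !ltW.
  by rewrite le_max lexx orbT.
have Ee : [set cumul lenF arrF setT s + beta_c4 c1 c2 lM lMl (t - s)
        | s in [set s | 0 <= s <= t]] (cumul lenF arrF setT s + beta_c4 c1 c2 lM lMl (t - s)).
  by exists s => //=; rewrite s0 (le_trans ss' s't).
apply: le_trans (ge_inf hlb Ee) _.
have hb := beta_split (s' - s - (lM + lMl) / c1) (t - s' - (lM + lMl) / c2) c10 c20.
rewrite /beta_c4.
have -> : t - s - (lM + lMl) / c1 - (lM + lMl) / c2 =
   (s' - s - (lM + lMl) / c1) + (t - s' - (lM + lMl) / c2) by lra.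
move: hb H1 H2; lra.
Qed.
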